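(* Let $P_0$ and $R_0$ be non-isomorphic posets, each of size $m$, let $i\ge 1$, and let $P_iR_i$ be as defined below. Then no witness of $D_{i+m+1}(P_iR_i)$ has size less than $|P_iR_i|=2m+2i$.
   Context: For $i\ge0$, $P_i$ (resp. $R_i$) is the poset obtained by placing $P_0$ (resp. $R_0$) above a chain of $i$ elements (every element of $P_0$ above every chain element), and $P_iR_i$ is the disjoint union of $P_i$ and $R_i$. A downset is a downward-closed subset; $D_n(Q)$ is the set of downsets of $Q$ of size $n$ up to isomorphism. A poset $Q$ is a witness of a set $\Gamma_n$ of unlabelled posets of size $n$ if $D_n(Q)=\Gamma_n$. *)

(* Defs.v *)
From mathcomp Require Import all_boot.
Set Implicit Arguments. Unset Strict Implicit. Unset Printing Implicit Defensive.

Definition is_poset (T : finType) (le : rel T) : Prop :=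
  [/\ reflexive le, antisymmetric le & transitive le].

Definition is_downset (T : finType) (le : rel T) (S : {set T}) : Prop :=
  forall x y, y \in S -> le x y -> x \in S.

Definition sub_iso (T T' : finType) (le : rel T) (le' : rel T')
  (S : {set T}) (S' : {set T'}) : Prop :=
  exists f : T -> T',
    [/\ {in S &, injective f}, f @: S = S' &
        {in S &, forall x y, le' (f x) (f y) = le x y}].

Definition poset_iso (T T' : finType) (le : rel T) (le' : rel T') : Prop :=
  sub_iso le le' [set: T] [set: T'].

(* D_n(T) = D_n(T') as sets of isomorphism classes of downsets of size n *)
Definition same_Dn (n : nat) (T T' : finType) (le : rel T) (le' : rel T') : Prop :=
  (forall S : {set T}, is_downset le S -> #|S| = n ->
     exists2 S' : {set T'}, is_downset le' S' /\ #|S'| = n & sub_iso le le' S S') /\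
  (forall S' : {set T'}, is_downset le' S' -> #|S'| = n ->
     exists2 S : {set T}, is_downset le S /\ #|S| = n & sub_iso le le' S S').

(* P_i: P_0 placed above a chain of i elements (chain = 'I_i with <=). *)
Definition above_chain_le (T : finType) (le : rel T) (i : nat) : rel (T + 'I_i) :=
  fun x y => match x, y with
  | inl a, inl b => le a b
  | inr j, inr k => (j <= k)%N
  | inr _, inl _ => true
  | inl _, inr _ => false
  end.

Definition dunion_le (T U : finType) (leT : rel T) (leU : rel U) : rel (T + U) :=
  fun x y => match x, y with
  | inl a, inl b => leT a b
  | inr a, inr b => leU a b
  | _, _ => false
  end.

Arguments above_chain_le T le i : clear implicits.
Definition PiRi_le (T U : finType) (leP : rel T) (leR : rel U) (i : nat)
  : rel ((T + 'I_i) + (U + 'I_i)) :=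
  @dunion_le _ _ (@above_chain_le T leP i) (@above_chain_le U leR i).
Arguments PiRi_le T U leP leR i : clear implicits.

(* Main.v *)
Require Import Defs.
From mathcomp Require Import all_boot.
From mathcomp Require Import zify.
Set Implicit Arguments. Unset Strict Implicit. Unset Printing Implicit Defensive.

Definition isl (A B : Type) (w : A + B) : bool := if w is inl _ then true else false.

Lemma iso_count (A B : finType) (leA : rel A) (leB : rel B) (S : {set A}) (f : A -> B) :
  {in S &, injective f} -> {in S &, forall x y, leB (f x) (f y) = leA x y} ->
  forall x, x \in S -> #|[set y in S | leA y x]| = #|[set w in f @: S | leB w (f x)]|.
Proof.
move=> inj mono x xS.
have -> : [set w in f @: S | leB w (f x)] = f @: [set y in S | leA y x].
  apply/setP => w; rewrite !inE; apply/andP/imsetP.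
    case=> /imsetP [y yS ->] le; exists y => //; rewrite inE yS -mono //.
  case=> y; rewrite inE => /andP[yS le] ->; split; first exact: imset_f.
  by rewrite mono.
rewrite card_in_imset //.
by move=> y z; rewrite !inE => /andP[? _] /andP[? _]; exact: inj.
Qed.

Lemma exists_min (A : finType) (le : rel A) : reflexive le -> antisymmetric le ->
  transitive le -> forall (X : {set A}) x0, x0 \in X ->
  exists2 z, z \in X & forall y, y \in X -> le y z -> y = z.
Proof.
move=> refl anti trans X x0 x0X.
case: (arg_minnP (fun z => #|[set y | le y z]|) x0X) => z zX zmin.
exists z => // y yX le_yz.
have sub : [set t | le t y] \subset [set t | le t z].
  by apply/subsetP => t; rewrite !inE => h; exact: trans h le_yz.
have : [set t | le t y] == [set t | le t z] by rewrite eqEcard sub zmin.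
move/eqP/setP/(_ z); rewrite !inE refl => le_zy.
by apply: anti; rewrite le_yz le_zy.
Qed.

Lemma iso_from (T U : finType) (leP : rel T) (leR : rel U) (i : nat) (Q : finType)
  (leQ : rel Q) (C : {set Q}) (f g : Q -> (T + 'I_i) + (U + 'I_i)) :
  reflexive leP -> #|T| = #|U| ->
  {in C &, injective f} -> f @: C = [set w | isl w] ->
  {in C &, forall x y, PiRi_le T U leP leR i (f x) (f y) = leQ x y} ->
  {in C &, injective g} -> g @: C = [set w | ~~ isl w] ->
  {in C &, forall x y, PiRi_le T U leP leR i (g x) (g y) = leQ x y} ->
  poset_iso leP leR.
Proof.
move=> reflP cTU finj fC fmono ginj gC gmono.
have ex : forall a : T, exists u : U,
    [exists x in C, (f x == inl (inl a)) && (g x == inr (inl u))].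
  move=> a.
  have : inl (inl a) \in f @: C by rewrite fC inE.
  case/imsetP => x xC Ef.
  have : g x \in g @: C by exact: imset_f.
  rewrite gC inE.
  case Eg: (g x) => [b|[u|j]] // _.
    by exists u; apply/existsP; exists x; rewrite xC -Ef Eg !eqxx.
  exfalso.
  have c1 := iso_count finj fmono xC; have c2 := iso_count ginj gmono xC.
  rewrite fC -Ef in c1; rewrite gC Eg in c2.
  have h1 : i < #|[set w in [set w0 | isl w0] | PiRi_le T U leP leR i w (inl (inl a))]|.
    apply: (@leq_trans #|inl (inl a) |: [set inl (inr k) | k : 'I_i]|).
      rewrite cardsU1 card_imset; last by move=> k1 k2 [].
      rewrite card_ord; case: imsetP => //= -[k _] //.
    apply: subset_leq_card; apply/subsetP => w; rewrite !inE.
    case/orP => [/eqP -> /=|/imsetP [k _ ->] //]; exact: reflP.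
  have h2 : #|[set w in [set w0 | ~~ isl w0] | PiRi_le T U leP leR i w (inr (inr j))]| <= i.
    apply: (@leq_trans #|[set inr (inr k) | k : 'I_i]|); last first.
      by apply: (leq_trans (leq_imset_card _ _)); rewrite card_ord.
    apply: subset_leq_card; apply/subsetP => w; rewrite !inE; case: w => [w|[w|k]] //= _.
    exact: imset_f.
  by move: h1; rewrite -c1 c2 ltnNge h2.
pose phi a := xchoose (ex a).
have phiP : forall a, exists2 x, x \in C & f x = inl (inl a) /\ g x = inr (inl (phi a)).
  move=> a; case/existsP: (xchooseP (ex a)) => x /andP[xC /andP[/eqP h1 /eqP h2]].
  by exists x.
have phimono : forall a b, leR (phi a) (phi b) = leP a b.
  move=> a b; have [xa xaC [fa ga]] := phiP a; have [xb xbC [fb gb]] := phiP b.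
  have := gmono _ _ xaC xbC; have := fmono _ _ xaC xbC.
  by rewrite fa fb ga gb /= => -> ->.
have phiinj : injective phi.
  move=> a b e; have [xa xaC [fa ga]] := phiP a; have [xb xbC [fb gb]] := phiP b.
  have exy : xa = xb by apply: ginj; rewrite // ga gb e.
  by move: fa; rewrite exy fb => -[].
exists phi; split.
- by move=> a b _ _; exact: phiinj.
- apply/eqP; rewrite eqEcard subsetT /= card_imset // !cardsT cTU //.
- by move=> a b _ _; exact: phimono.
Qed.

Lemma leW_isl (T U : finType) (leP : rel T) (leR : rel U) i a b :
  PiRi_le T U leP leR i a b -> isl a = isl b.
Proof. by case: a => [a|a]; case: b => [b|b]. Qed.

Lemma a1 m i : 1 + (m + i) = i + m + 1. Proof. lia. Qed.

Theorem mainTheorem5 (m i : nat) (T U : finType) (leP : rel T) (leR : rel U) :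
  is_poset leP -> is_poset leR -> #|T| = m -> #|U| = m ->
  ~ poset_iso leP leR -> (1 <= i)%N ->
  forall (Q : finType) (leQ : rel Q), is_poset leQ ->
    same_Dn (i + m + 1) leQ (PiRi_le T U leP leR i) ->
    (2 * m + 2 * i <= #|Q|)%N.
Proof.
move=> [reflP _ _] posR cT cU niso Hi Q leQ [reflQ antiQ transQ] [D1 D2].
pose i0 : 'I_i := Ordinal Hi.
pose leW := PiRi_le T U leP leR i.
pose L : {set (T + 'I_i) + (U + 'I_i)} := [set w | isl w].
pose R : {set (T + 'I_i) + (U + 'I_i)} := [set w | ~~ isl w].
have cardL : #|L| = m + i.
  have -> : L = inl @: [set: T + 'I_i].
    apply/setP => -[w|w]; rewrite !inE /=; first by rewrite imset_f.
    by apply/esym/imsetP => -[].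
  by rewrite card_imset; [rewrite cardsT card_sum cT card_ord | move=> ? ? []].
have cardR : #|R| = m + i.
  have -> : R = inr @: [set: U + 'I_i].
    apply/setP => -[w|w]; rewrite !inE /=; last by rewrite imset_f.
    by apply/esym/imsetP => -[].
  by rewrite card_imset; [rewrite cardsT card_sum cU card_ord | move=> ? ? []].
pose SX := inr (inr i0) |: L.
pose SY := inl (inr i0) |: R.
have dSX : is_downset leW SX.
  move=> x y; rewrite !inE => /orP[/eqP ->|].
    case: x => [x|[x|k]] //= le; apply/orP; left; apply/eqP.
    by do 2 f_equal; apply: val_inj => /=; move: le; rewrite leqn0 => /eqP.
  by move=> yl /leW_isl ->; rewrite yl orbT.
have dSY : is_downset leW SY.
  move=> x y; rewrite !inE => /orP[/eqP ->|].
    case: x => [[x|k]|x] //= le; apply/orP; left; apply/eqP.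
    by do 2 f_equal; apply: val_inj => /=; move: le; rewrite leqn0 => /eqP.
  by move=> yl /leW_isl ->; rewrite yl orbT.
have cSX : #|SX| = i + m + 1 by rewrite cardsU1 inE /= cardL; apply: a1.
have cSY : #|SY| = i + m + 1 by rewrite cardsU1 inE /= cardR; apply: a1.
have [S [dS cS] [f [finj fim fmono]]] := D2 SX dSX cSX.
have [S' [dS' cS'] [g [ginj gim gmono]]] := D2 SY dSY cSY.
pose CP := [set x in S | isl (f x)].
pose CR := [set x in S' | ~~ isl (g x)].
have CPS : {subset CP <= S} by move=> x; rewrite inE => /andP[].
have CRS : {subset CR <= S'} by move=> x; rewrite inE => /andP[].
have fCP : f @: CP = L.
  apply/setP => w; apply/imsetP/idP.
    by case=> x; rewrite !inE => /andP[_ h] ->.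
  move=> wL; have : w \in f @: S by rewrite fim inE wL orbT.
  by case/imsetP => x xS E; exists x => //; rewrite inE xS -E; rewrite inE in wL.
have gCR : g @: CR = R.
  apply/setP => w; apply/imsetP/idP.
    by case=> x; rewrite !inE => /andP[_ h] ->.
  move=> wL; have : w \in g @: S' by rewrite gim inE wL orbT.
  by case/imsetP => x xS E; exists x => //; rewrite inE xS -E; rewrite inE in wL.
have finjP : {in CP &, injective f} by apply: (sub_in2 _ finj).
have ginjR : {in CR &, injective g} by apply: (sub_in2 _ ginj).
have fmonoP : {in CP &, forall x y, leW (f x) (f y) = leQ x y}.
  by move=> x y /CPS xS /CPS yS; exact: fmono.
have gmonoR : {in CR &, forall x y, leW (g x) (g y) = leQ x y}.
  by move=> x y /CRS xS /CRS yS; exact: gmono.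
have cCP : #|CP| = m + i by rewrite -cardL -fCP card_in_imset.
have cCR : #|CR| = m + i by rewrite -cardR -gCR card_in_imset.
have dCP : is_downset leQ CP.
  move=> x y; rewrite !inE => /andP[yS fy] le.
  have xS := dS _ _ yS le; rewrite xS /=.
  by move: (fmono x y xS yS); rewrite le => /leW_isl ->.
have dCR : is_downset leQ CR.
  move=> x y; rewrite !inE => /andP[yS fy] le.
  have xS := dS' _ _ yS le; rewrite xS /=.
  by move: (gmono x y xS yS); rewrite le => /leW_isl ->.
case: (boolP [disjoint CP & CR]) => disj.
  have := max_card (mem (CP :|: CR)).
  rewrite cardsU cCP cCR; move: disj; rewrite -setI_eq0 => /eqP ->.
  rewrite cards0 => H; clear -H; lia.
exfalso.
move: disj; rewrite -setI_eq0 => /set0Pn [w]; rewrite inE => /andP[wP wR].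
have nsub : ~~ (CR \subset CP).
  apply/negP => sub.
  have eCR : CR = CP by apply/eqP; rewrite eqEcard sub cCP cCR leqnn.
  apply: niso; apply: (@iso_from T U leP leR i Q leQ CP f g) => //.
  - by rewrite cT cU.
  - by rewrite -eCR.
  - by rewrite -eCR.
  - by rewrite -eCR.
have [z0 z0R z0P] := subsetPn nsub.
have z0D : z0 \in CR :\: CP by rewrite inE z0R z0P.
have [z zD zmin] := exists_min reflQ antiQ transQ z0D.
move: (zD); rewrite inE => /andP[zP zR].
have : inl (inr i0) \in f @: CP by rewrite fCP inE.
case/imsetP => r rP fr.
have : inr (inr i0) \in g @: CR by rewrite gCR inE.
case/imsetP => s sR gs.
have rle : forall x, x \in CP -> leQ r x.
  move=> x xP; rewrite -fmonoP // -fr.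
  by move: xP; rewrite inE => /andP[_]; case: (f x) => [[a|k]|a].
have sle : forall x, x \in CR -> leQ s x.
  move=> x xR; rewrite -gmonoR // -gs.
  by move: xR; rewrite inE => /andP[_]; case: (g x) => [a|[a|k]].
have sP : s \in CP by apply: (dCP s w wP); exact: sle.
pose D := z |: CP.
have dD : is_downset leQ D.
  move=> x y; rewrite in_setU1 => /orP[/eqP ->|yP] le; last by rewrite in_setU1 (dCP x y yP le) orbT.
  have xR : x \in CR by apply: (dCR x z zR le).
  case: (boolP (x \in CP)) => xP; first by rewrite in_setU1 xP orbT.
  by rewrite in_setU1 (zmin x) ?eqxx // inE xP xR.
have cD : #|D| = i + m + 1 by rewrite cardsU1 zP cCP; apply: a1.
have rD : forall x, x \in D -> leQ r x.
  move=> x; rewrite in_setU1 => /orP[/eqP ->|]; last exact: rle.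
  by apply: (transQ s); [exact: rle | exact: sle].
have [D' [dD' cD'] [h [hinj him hmono]]] := D1 D dD cD.
have hr : forall w, w \in D' -> leW (h r) w.
  move=> w'; rewrite -him => /imsetP [x xD ->]; rewrite /leW hmono //; last by rewrite in_setU1 rP orbT.
  exact: rD.
case E: (isl (h r)).
  have : D' \subset L.
    by apply/subsetP => w' /hr /leW_isl; rewrite E inE => <-.
  move/subset_leq_card; rewrite cardL cD' => H; clear -H; lia.
have : D' \subset R.
  by apply/subsetP => w' /hr /leW_isl; rewrite E inE => <-.
move/subset_leq_card; rewrite cardR cD' => H; clear -H; lia.
Qed.
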